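(* Let $n$ be a positive integer and let $\alpha,\beta,\gamma,\delta$ be distinct complex numbers satisfying $(\alpha+\beta)(\gamma+\delta)=2(\alpha\beta+\gamma\delta)$. Then $$\lim_{k\to\alpha}\frac{d^n}{dk^n}\,\frac{(k-\gamma)^n(k-\delta)^n}{(k-\beta)^{n+1}}=\begin{cases}0 & n\text{ odd},\\[4pt] (-1)^{n/2}\dfrac{(\gamma-\delta)^n}{(\alpha-\beta)^{n+1}}\,\prod_{i=1}^{n/2}(2i-1)^2 & n\text{ even}.\end{cases}$$ *)

(* Defs.v *)
From mathcomp Require Import all_boot all_order all_algebra.
From mathcomp Require Import boolp classical_sets reals topology normedtype derive.
From mathcomp Require Import complex.
Import GRing.Theory Num.Theory numFieldNormedType.Exports.
Local Open Scope ring_scope.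

(* The complex numbers, built as R[i] over a real type R (so complete,
   i.e. isomorphic to the usual field C), seen as a numClosedFieldType
   so that MathComp-Analysis equips it with its standard normed
   (hence topological) structure over itself; derivatives of
   functions C -> C are then complex derivatives. *)
Definition Cplx (R : realType) : numClosedFieldType := R[i].

(* Main.v *)
Require Import Defs.
From mathcomp Require Import all_boot all_order all_algebra.
From mathcomp Require Import boolp classical_sets reals topology normedtype derive.
From mathcomp Require Import complex functions.
From mathcomp Require Import ring zify.
Import Order.TTheory GRing.Theory Num.Theory numFieldNormedType.Exports.
Local Open Scope ring_scope.
Local Open Scope classical_set_scope.

Section NatPart.
Local Open Scope nat_scope.
Lemma fact2_sq m : ((2 * m)`! ^ 2 = 4 ^ m * m`! ^ 2 * \prod_(1 <= i < m.+1) (2 * i - 1) ^ 2)%N.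
Proof.
elim: m => [|m IH]; first by rewrite big_geq.
rewrite big_nat_recr //= mulnS !factS.
have -> : (2 + 2 * m - 1 = (2 * m).+1)%N by lia.
rewrite (expnS 4 m); move: IH; move: (4 ^ m)%N ((2 * m)`!) (m`!) (\prod_(1 <= i < m.+1) (2 * i - 1) ^ 2)%N => q F f P IH.
rewrite !expnMn IH.
move: (f ^ 2)%N => g; lia.
Qed.

Lemma binfact m : ('C(2 * m, m) * (2 * m)`! = 4 ^ m * \prod_(1 <= i < m.+1) (2 * i - 1) ^ 2)%N.
Proof.
have h : ('C(2 * m, m) * (m`! * m`!) = (2 * m)`!)%N.
  have := @bin_fact (2 * m) m; rewrite (_ : 2 * m - m = m)%N; last by lia.
  by apply; lia.
have h2 := fact2_sq m.
move: h h2; move: ('C(2 * m, m)) ((2 * m)`!) (m`!) (4 ^ m)%N (\prod_(1 <= i < m.+1) (2 * i - 1) ^ 2)%N (fact_gt0 m).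
move=> c F f q P fpos h h2.
apply/eqP; rewrite -(eqn_pmul2r (_ : 0 < f * f)%N); last by rewrite muln_gt0 fpos.
apply/eqP; rewrite mulnAC h.
move: h2; rewrite !expnS !expn0 !muln1 => ->. lia.
Qed.
End NatPart.

Lemma auxLop (R : comRingType) (A B : R) (M i e : nat) :
  (A ^+ i.-1 *+ i * B ^+ e + A ^+ i * (B ^+ e.-1 *+ e)) * B - M%:R * (A ^+ i * B ^+ e) =
  i%:R * (A ^+ i.-1 * B ^+ e.+1) + (e%:R - M%:R) * (A ^+ i * B ^+ e).
Proof.
case: i => [|i]; case: e => [|e] /=; rewrite ?mulr0n ?mul0r ?mulr0 ?add0r ?addr0 ?exprS ?expr0;
 ring.
Qed.

Section Anal.
Variable C : numFieldType.

Lemma derivable_hornerC (p : {poly C}) x : derivable (horner p) x 1.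
Proof.
elim/poly_ind: p => [|p r ih].
  have -> : horner (0 : {poly C}) = cst 0 by apply/funext => y; rewrite horner0.
  exact: derivable_cst.
have -> : horner (p * 'X + r%:P) = (horner p * id) + cst r.
  by apply/funext => y /=; rewrite !hornerE.
apply: derivableD; last exact: derivable_cst.
by apply: derivableM; [exact: ih|exact: derivable_id].
Qed.

Lemma deriveEC (p : {poly C}) x : 'D_1 (horner p) x = (p^`()).[x].
Proof.
elim/poly_ind: p => [|p r ih].
  have -> : horner (0 : {poly C}) = cst 0 by apply/funext => y; rewrite horner0.
  by rewrite derive_cst deriv0 horner0.
have -> : horner (p * 'X + r%:P) = (horner p * id) + cst r.
  by apply/funext => y /=; rewrite !hornerE.
rewrite deriveD; [|apply: derivableM; [exact: derivable_hornerC|exact: derivable_id]|exact: derivable_cst].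
rewrite derive_cst addr0 deriveM; [|exact: derivable_hornerC|exact: derivable_id].
rewrite derive_id ih derivD derivC addr0 derivM derivX !hornerE /=.
by rewrite [_%:A]mulr1 [_ *: _]mulrC addrC.
Qed.

Global Instance is_derive_polyC (p : {poly C}) (x : C) :
  is_derive x (1:C) (horner p) p^`().[x].
Proof. by apply: DeriveDef; [exact: derivable_hornerC|rewrite deriveEC]. Qed.

Lemma is_derive_rat (Q : {poly C}) (M : nat) (b k : C) : k != b ->
  is_derive k 1 (fun x => Q.[x] / (x - b) ^+ M)
   ((Q^`() * ('X - b%:P) - M%:R *: Q).[k] / (k - b) ^+ M.+1).
Proof.
move=> kb.
have kb0 : k - b != 0 by rewrite subr_eq0.
pose h := (fun x : C => x - b) ^+ M.
have hd : is_derive k 1 h ((M%:R * (k - b) ^+ M.-1) *: 1).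
  apply: is_deriveX.
  have -> : (fun x : C => x - b) = id - cst b by [].
  apply: (is_derive_eq (is_deriveB _ _)).
  by rewrite subr0.
have hk : h k != 0 by rewrite /h exprfctE expf_neq0.
have hvd : is_derive k 1 (fun y => (h y)^-1) (- (h k) ^- 2 *: ((M%:R * (k - b) ^+ M.-1) *: 1)).
  apply: DeriveDef; first by apply: derivableV => //; case: hd.
  have hd' : derivable h k 1 by case: hd.
  by rewrite deriveV // derive_val.
have := @is_deriveM C C (horner Q) (fun y => (h y)^-1) k 1 _ _ _ hvd.
have -> : horner Q * (fun y => (h y)^-1) = (fun x => Q.[x] / (x - b) ^+ M).
  by apply/funext => y /=; rewrite /h exprfctE.
move=> H; apply: (is_derive_eq (H _ (is_derive_polyC Q k))).
rewrite /h !exprfctE /= !hornerE /=.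
clear H hvd hd hk h.
rewrite [_%:A]mulr1 /GRing.scale /=.
case: M => [|m] /=.
  by rewrite !expr0 expr1 !mul0r !mulr0 subr0 add0r invr1 mul1r mulfK.
move: (k - b) kb0 (Q.[k]) (Q^`().[k]) => x x0 q q'.
rewrite !exprS.
field.
by rewrite expf_neq0 ?x0.
Qed.

Lemma near_neqC (x b : C) : x != b -> \forall y \near x, y != b.
Proof.
move=> xb; exists `|x - b|; first by rewrite /= normr_gt0 subr_eq0.
by move=> y /= hy; apply/eqP => yb; move: hy; rewrite yb ltxx.
Qed.

Definition Lop (b : C) (M : nat) (Q : {poly C}) := Q^`() * ('X - b%:P) - M%:R *: Q.
Fixpoint Rit (b : C) (M j : nat) (Q : {poly C}) : {poly C} :=
  match j with 0 => Q | j'.+1 => Rit b M.+1 j' (Lop b M Q) end.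

Lemma deriv_iter (b : C) (j : nat) : forall M Q (f : C -> C),
  (forall x, x != b -> f x = Q.[x] / (x - b) ^+ M) ->
  forall x, x != b -> derive1n j f x = (Rit b M j Q).[x] / (x - b) ^+ (M + j).
Proof.
elim: j => [|j IH] M Q f hf x xb; first by rewrite addn0 /= hf.
rewrite derive1Sn /= -addSnnS; apply: IH => // y yb.
rewrite derive1E.
rewrite (@near_eq_derive _ _ _ f (fun x => Q.[x] / (x - b) ^+ M)).
  by have H := @is_derive_rat Q M b y yb; rewrite derive_val.
by near=> z; apply: hf; near: z; exact: near_neqC.
Unshelve. all: by end_near.
Qed.

Lemma lim_rat (P : {poly C}) N (b a : C) (f : C -> C) : a != b ->
  (forall x, x != b -> f x = P.[x] / (x - b) ^+ N) ->
  f x @[x --> a^'] --> P.[a] / (a - b) ^+ N.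
Proof.
move=> ab hf.
pose g := fun x : C => P.[x] / (x - b) ^+ N.
have cg : {for a, continuous g}.
  apply: differentiable_continuous; apply/derivable1_diffP.
  exact: (@ex_derive _ _ _ _ _ _ _ (@is_derive_rat P N b a ab)).
have := (continuous_withinNx _ _).1 cg.
apply: cvg_trans; apply: near_eq_cvg.
have : \forall y \near a^', y != b by apply: cvg_within; exact: near_neqC.
by apply: filterS => y /hf.
Qed.

Lemma RitD b j : forall M (p q : {poly C}), Rit b M j (p + q) = Rit b M j p + Rit b M j q.
Proof.
elim: j => [//|j IH] M p q /=; rewrite -IH; congr Rit.
by rewrite /Lop derivD mulrDl scalerDr opprD addrACA.
Qed.

Lemma RitZ b j : forall M c (p : {poly C}), Rit b M j (c *: p) = c *: Rit b M j p.
Proof.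
elim: j => [//|j IH] M c p /=; rewrite -IH; congr Rit.
by rewrite /Lop derivZ -scalerAl scalerBr; congr (_ - _); rewrite !scalerA mulrC.
Qed.

Lemma Rit_sum b j M (I : finType) (F : I -> {poly C}) :
  Rit b M j (\sum_i F i) = \sum_i Rit b M j (F i).
Proof.
apply: (big_morph (Rit b M j)); first exact: RitD.
elim: j M => [//|j IH] M /=.
by rewrite /Lop deriv0 mul0r scaler0 subr0 IH.
Qed.

Definition Tm (a b : C) (i e : nat) : {poly C} := ('X - a%:P) ^+ i * ('X - b%:P) ^+ e.

Lemma Lop_Tm a b M i e :
  Lop b M (Tm a b i e) = i%:R *: Tm a b i.-1 e.+1 + (e%:R - M%:R) *: Tm a b i e.
Proof.
rewrite /Lop /Tm derivM !deriv_exp !derivXsubC !mul1r.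
move: ('X - a%:P) ('X - b%:P) => A B.
rewrite -!mul_polyC polyCB !polyC_natr; exact: auxLop.
Qed.

Lemma Rit_Tm_eval a b j : forall M i e, (i + e).+1 = (M + j)%N ->
  (Rit b M j (Tm a b i e)).[a] = if i == j then j`!%:R * (a - b) ^+ (M + j).-1 else 0.
Proof.
elim: j => [|j IH] M i e hie /=.
  rewrite addn0 in hie; rewrite /Tm hornerM !horner_exp !hornerXsubC subrr addn0 -hie /=.
  by case: i {hie} => [|i]; rewrite ?expr0 ?mul1r ?exprS ?mul0r.
rewrite Lop_Tm RitD !RitZ hornerD !hornerZ.
rewrite (IH M.+1 i e); last by rewrite addSnnS.
case: i hie => [|i] hie.
  rewrite mul0r add0r /=; case: eqP => [j0|]; last by rewrite mulr0.
  have -> : e = M by move: hie; rewrite -j0; lia.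
  by rewrite subrr mul0r.
rewrite (IH M.+1 i e.+1) /=; last by rewrite addnS hie addSnnS.
rewrite eqSS; case: (eqVneq i j) => [ij|ij].
  subst i; rewrite (_ : (j.+1 == j) = false); last by apply/eqP; lia.
  rewrite mulr0 addr0 factS natrM mulrA.
  by rewrite addnS.
rewrite mulr0 add0r; case: eqP => [ij1|]; last by rewrite mulr0.
have -> : e = M by move: hie; rewrite -ij1; lia.
by rewrite subrr mul0r.
Qed.
End Anal.

Theorem theorem7 (R : realType) (n : nat) (alpha beta gamma delta : Cplx R) :
  (0 < n)%N ->
  alpha != beta -> alpha != gamma -> alpha != delta ->
  beta != gamma -> beta != delta -> gamma != delta ->
  (alpha + beta) * (gamma + delta) = 2 * (alpha * beta + gamma * delta) ->
  (derive1n n (fun k : Cplx R =>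
       (k - gamma) ^+ n * (k - delta) ^+ n / (k - beta) ^+ n.+1)) k
    @[k --> alpha^'] -->
  (if odd n then 0
   else (-1) ^+ (n./2) * (gamma - delta) ^+ n / (alpha - beta) ^+ n.+1
        * ((\prod_(1 <= i < (n./2).+1) (2 * i - 1) ^ 2)%N)%:R).
Proof.
move=> n0 ab ag ad bg bd gd hH.
set f := fun k : Cplx R => _.
have x0n : alpha - beta != 0 by rewrite subr_eq0.
set x0 := alpha - beta.
set U := (alpha - gamma) * (alpha - delta).
set V := (beta - gamma) * (beta - delta).
have H0 : (alpha + beta) * (gamma + delta) - 2 * (alpha * beta + gamma * delta) = 0.
  by rewrite hH subrr.
have quad : forall k, (k - gamma) * (k - delta) = (U * (k - beta) ^+ 2 + V * (k - alpha) ^+ 2) / x0 ^+ 2.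
  move=> k; apply: (mulIf (expf_neq0 2 x0n)); rewrite divfK ?expf_neq0 //.
  apply/eqP; rewrite -subr_eq0; apply/eqP.
  have -> : (k - gamma) * (k - delta) * x0 ^+ 2 - (U * (k - beta) ^+ 2 + V * (k - alpha) ^+ 2)
     = ((alpha + beta) * (gamma + delta) - 2 * (alpha * beta + gamma * delta)) * ((k - alpha) * (k - beta)).
    rewrite /x0 /U /V; ring.
  by rewrite H0 mul0r.
have UV : 4 * (U * V) = - ((gamma - delta) ^+ 2 * x0 ^+ 2).
  have -> : 4 * (U * V) = - ((gamma - delta) ^+ 2 * x0 ^+ 2) +
     ((alpha + beta) * (gamma + delta) - 2 * (alpha * beta + gamma * delta)) ^+ 2.
    rewrite /x0 /U /V; ring.
  by rewrite H0 expr0n addr0.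
pose c (i : nat) := (U ^+ (n - i) * V ^+ i) *+ 'C(n, i) / x0 ^+ (2 * n).
pose Q := \sum_(i < n.+1) c i *: Tm _ alpha beta (2 * i) (2 * (n - i)).
have hf : forall k, k != beta -> f k = Q.[k] / (k - beta) ^+ n.+1.
  move=> k _; rewrite /f; congr (_ / _).
  rewrite -exprMn quad exprMn exprVn -exprM exprDn mulr_suml.
  rewrite /Q horner_sum; apply: eq_bigr => i _.
  rewrite hornerZ /Tm hornerM !horner_exp !hornerXsubC /c.
  rewrite !exprMn !mul2n -!addnn !exprD.
  ring.
have hd := @deriv_iter _ beta n n.+1 Q f hf.
have hl := @lim_rat _ _ _ beta alpha _ ab hd.
suff -> : (if odd n then 0
   else (-1) ^+ (n./2) * (gamma - delta) ^+ n / (alpha - beta) ^+ n.+1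
        * ((\prod_(1 <= i < (n./2).+1) (2 * i - 1) ^ 2)%N)%:R) =
   (Rit _ beta n.+1 n Q).[alpha] / (alpha - beta) ^+ (n.+1 + n) by [].
rewrite /Q Rit_sum horner_sum.
have ev : forall i : 'I_n.+1, (Rit _ beta n.+1 n (c i *: Tm _ alpha beta (2 * i) (2 * (n - i)))).[alpha]
   = c i * (if (2 * i)%N == n then n`!%:R * x0 ^+ (n.+1 + n).-1 else 0).
  move=> i; rewrite RitZ hornerZ Rit_Tm_eval //.
  have := ltn_ord i; lia.
rewrite (eq_bigr _ (fun i _ => ev i)).
case: (boolP (odd n)) => on.
  rewrite big1 ?mul0r // => i _; case: eqP => [e|]; last by rewrite mulr0.
  by move: on; rewrite -[n in odd n]e oddM.
have nm : n = (2 * n./2)%N by move: (odd_double_half n); rewrite (negbTE on) add0n mul2n.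
have mlt : (n./2 < n.+1)%N by lia.
rewrite (bigD1 (Ordinal mlt)) //= -nm eqxx.
rewrite (_ : \sum_(i < n.+1 | i != Ordinal mlt) _ = 0) ?addr0; last first.
  apply: big1 => i /eqP hi; case: eqP => [e|]; last by rewrite mulr0.
  by exfalso; apply: hi; apply: val_inj => /=; lia.
rewrite /c.
move: (binfact n./2); rewrite -nm => bf.
have -> : (n - n./2 = n./2)%N by lia.
rewrite -/x0.
move: bf; set m := n./2; set P := (\prod_(1 <= i < m.+1) (2 * i - 1) ^ 2)%N => bf.
have key : (U * V) ^+ m * ('C(n, m)%:R * n`!%:R) = (-1) ^+ m * (gamma - delta) ^+ n * x0 ^+ n * P%:R.
  rewrite -natrM bf natrM natrX mulrA -exprMn (mulrC (U * V)) UV.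
  have hG : forall z : Cplx R, z ^+ n = (z ^+ 2) ^+ m by move=> z; rewrite {1}nm exprM.
  by rewrite (exprNn ((gamma - delta) ^+ 2 * x0 ^+ 2)) exprMn -!exprM -nm !mulrA.
rewrite -exprMn -(mulr_natr ((U * V) ^+ m)) mul2n -addnn.
have -> : (U * V) ^+ m * 'C(n, m)%:R / x0 ^+ (n + n) * (n`!%:R * x0 ^+ (n + n)) =
   (U * V) ^+ m * ('C(n, m)%:R * n`!%:R).
  by field; rewrite expf_neq0.
rewrite key exprD.
by field; rewrite !expf_neq0.
Qed.
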